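(* Let $X$ be an $n$-dimensional real normed space and let $Y \subseteq X$ be a $k$-dimensional subspace, where $1 \leq k \leq n-1$. Suppose that $x_0 \in X \setminus Y$ and there exists a minimal $I$-set for $Y$ with respect to $x_0$ of cardinality $l$. Then $\dim P_Y(x_0) \leq k-l+1$.
   Context: $P_Y(x)=\{y\in Y:\|x-y\|=\mathrm{dist}(x,Y)\}$ is the (convex) set of best approximations of $x$ in $Y$, and $\dim$ denotes affine dimension. For $x_0\in X\setminus Y$, a set of functionals $\{f_1,\dots,f_l\}\subseteq \mathrm{ext}\,B_{X^*}$ (extreme points of the dual unit ball) is an $I$-set for $Y$ with respect to $x_0$ if there exist $y_0\in P_Y(x_0)$ and positive reals $\alpha_1,\dots,\alpha_l$ with $\sum_i\alpha_i=1$ such that $f_i(x_0-y_0)=\|x_0-y_0\|$ for all $i$ and $\sum_{i=1}^l\alpha_i f_i(y)=0$ for all $y\in Y$. An $I$-set is minimal if no proper subset of it is an $I$-set for $Y$ with respect to $x_0$. *)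

(* Defs.v *)
From HB Require Import structures.
From mathcomp Require Import all_boot all_order all_algebra.
From mathcomp Require Import all_classical all_reals all_analysis.
Set Implicit Arguments. Unset Strict Implicit. Unset Printing Implicit Defensive.
Import Order.TTheory GRing.Theory Num.Theory.
Import numFieldNormedType.Exports.
Local Open Scope classical_set_scope.
Local Open Scope ring_scope.

Section Defs.
Variables (R : realType) (V : normedModType R).

Definition lin_indep (m : nat) (b : 'I_m -> V) : Prop :=
  forall c : 'I_m -> R, \sum_(i < m) c i *: b i = 0 -> forall i, c i = 0.

Definition span_of (m : nat) (b : 'I_m -> V) : set V :=
  [set x | exists c : 'I_m -> R, x = \sum_(i < m) c i *: b i].

Definition has_dim (n : nat) : Prop :=
  exists e : 'I_n -> V, lin_indep e /\ span_of e = setT.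

Definition subspace_dim (Y : set V) (k : nat) : Prop :=
  exists b : 'I_k -> V, lin_indep b /\ Y = span_of b.

Definition dist_to (x : V) (Y : set V) : R := inf [set `|x - y| | y in Y].

Definition bestapprox (Y : set V) (x : V) : set V :=
  [set y | Y y /\ `|x - y| = dist_to x Y].

Definition lin_functional (f : V -> R) : Prop :=
  forall (a : R) (x y : V), f (a *: x + y) = a * f x + f y.

(* closed unit ball of the dual space X^* (in finite dimension every
   linear functional is continuous; ||f|| <= 1 iff |f x| <= ||x||) *)
Definition dual_ball : set (V -> R) :=
  [set f | lin_functional f /\ forall x, `|f x| <= `|x|].

Definition ext_points (B : set (V -> R)) : set (V -> R) :=
  [set f | B f /\ forall (g h : V -> R) (t : R), B g -> B h -> 0 < t < 1 ->
     f = (fun x => t * g x + (1 - t) * h x) -> g = h].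

Definition Iset_family (Y : set V) (x0 : V) (m : nat) (g : 'I_m -> V -> R) :=
  (forall i, ext_points dual_ball (g i)) /\
  exists y0, bestapprox Y x0 y0 /\
  exists alpha : 'I_m -> R, (forall i, 0 < alpha i) /\
    \sum_(i < m) alpha i = 1 /\
    (forall i, g i (x0 - y0) = `|x0 - y0|) /\
    (forall y, Y y -> \sum_(i < m) alpha i * g i y = 0).

Definition is_Iset (Y : set V) (x0 : V) (S : set (V -> R)) : Prop :=
  exists (m : nat) (g : 'I_m -> V -> R),
    injective g /\ range g = S /\ Iset_family Y x0 g.

Definition minimal_Iset (Y : set V) (x0 : V) (S : set (V -> R)) : Prop :=
  is_Iset Y x0 S /\ forall S', S' `<` S -> ~ is_Iset Y x0 S'.

Definition has_card (S : set (V -> R)) (l : nat) : Prop :=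
  exists f : 'I_l -> V -> R, injective f /\ range f = S.

Definition aff_indep (m : nat) (p : 'I_m.+1 -> V) : Prop :=
  lin_indep (fun i : 'I_m => p (lift ord0 i) - p ord0).

Definition affdim_le (S : set V) (d : int) : Prop :=
  forall (m : nat) (p : 'I_m.+1 -> V), (forall i, S (p i)) -> aff_indep p ->
    (m%:Z <= d).

End Defs.

(* Main.v *)
Require Import Defs.
From HB Require Import structures.
From mathcomp Require Import all_boot all_order all_algebra.
From mathcomp Require Import all_classical all_reals all_analysis.
From mathcomp Require Import zify.
Import Order.TTheory GRing.Theory Num.Theory.
Import numFieldNormedType.Exports.
Local Open Scope classical_set_scope.
Local Open Scope ring_scope.
Set Implicit Arguments. Unset Strict Implicit.

Section Helpers.
Variables (R : realType) (V : normedModType R).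

Lemma lf0 (f : V -> R) : lin_functional f -> f 0 = 0.
Proof.
move=> hf; have := hf (-1) 0 0.
by rewrite scaler0 addr0 mulN1r addNr.
Qed.

Lemma lfD (f : V -> R) x y : lin_functional f -> f (x + y) = f x + f y.
Proof. by move=> hf; have := hf 1 x y; rewrite scale1r mul1r. Qed.

Lemma lfZ (f : V -> R) a x : lin_functional f -> f (a *: x) = a * f x.
Proof. by move=> hf; have := hf a x 0; rewrite addr0 (lf0 hf) addr0. Qed.

Lemma lfB (f : V -> R) x y : lin_functional f -> f (x - y) = f x - f y.
Proof.
move=> hf; rewrite (lfD _ _ hf) -scaleN1r (lfZ _ _ hf) mulN1r //.
Qed.

Lemma lf_sum (f : V -> R) m (c : 'I_m -> R) (b : 'I_m -> V) :
  lin_functional f -> f (\sum_(i < m) c i *: b i) = \sum_(i < m) c i * f (b i).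
Proof.
move=> hf; rewrite (big_morph f (fun x y => lfD x y hf) (lf0 hf)).
by apply: eq_bigr => i _; rewrite (lfZ _ _ hf).
Qed.

Lemma span_sub m (b : 'I_m -> V) y z :
  span_of b y -> span_of b z -> span_of b (y - z).
Proof.
move=> [c ->] [c' ->]; exists (fun i => c i - c' i).
by rewrite -sumrB; apply: eq_bigr => i _; rewrite scalerBl.
Qed.

Lemma sum_in_set m (A : {set 'I_m}) (F : 'I_m -> R) :
  (forall j, j \notin A -> F j = 0) -> \sum_(j in A) F j = \sum_j F j.
Proof.
move=> h; rewrite big_mkcond /=; apply: eq_bigr => j _.
by case: ifP => // /negbT /h ->.
Qed.

End Helpers.

Section Claim.
Variables (R : realType) (V : normedModType R).

Lemma prop_claim (Y : set V) (x0 y0 : V) m (g : 'I_m -> V -> R) (al : 'I_m -> R) :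
  injective g -> (forall i, ext_points (@dual_ball R V) (g i)) -> bestapprox Y x0 y0 ->
  (forall i, 0 < al i) -> \sum_(i < m) al i = 1 ->
  (forall i, g i (x0 - y0) = `|x0 - y0|) ->
  (forall y, Y y -> \sum_(i < m) al i * g i y = 0) ->
  (forall S', S' `<` range g -> ~ is_Iset Y x0 S') ->
  forall u : 'I_m -> R, (forall y, Y y -> \sum_(i < m) u i * g i y = 0) ->
  forall i, u i = (\sum_(j < m) u j) * al i.
Proof.
move=> ginj gext by0 alpos alsum galy0 galY minS u uY.
set s := \sum_(j < m) u j.
pose gam i := u i - s * al i.
suff H : forall i, gam i = 0 by move=> i; apply/eqP; rewrite -subr_eq0 -[_ - _]/(gam i) H.
move=> i; apply: contrapT => gi0.
have sg : \sum_(j < m) gam j = 0.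
  by rewrite /gam sumrB -mulr_sumr alsum mulr1 subrr.
have gY : forall y, Y y -> \sum_(j < m) gam j * g j y = 0.
  move=> y Yy; rewrite /gam.
  under eq_bigr => j _ do rewrite mulrBl -mulrA.
  by rewrite sumrB -mulr_sumr galY // mulr0 subr0 uY.
have [i1 gi1] : exists i1, 0 < gam i1.
  case: (pselect (exists i1, 0 < gam i1)) => // nex.
  have le : forall j, 0 <= - gam j.
    move=> j; rewrite oppr_ge0 leNgt; apply/negP => h; apply: nex; by exists j.
  have := @psumr_eq0P _ _ predT (fun j => - gam j) (fun j _ => le j).
  rewrite sumrN sg oppr0 => /(_ erefl i isT) /eqP; rewrite oppr_eq0 => /eqP.
  by [].
case: (@arg_minP _ R _ i1 (fun j => 0 < gam j) (fun j => al j / gam j) gi1) => i2 gi2 mn.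
set t := al i2 / gam i2.
have tpos : 0 < t by rewrite divr_gt0.
pose del j := al j - t * gam j.
have del_ge0 : forall j, 0 <= del j.
  move=> j; rewrite /del subr_ge0.
  case: (ltrP 0 (gam j)) => hj.
    by rewrite -ler_pdivlMr //; apply: mn.
  apply: le_trans (ltW (alpos j)).
  by rewrite pmulr_rle0.
have del2 : del i2 = 0.
  by rewrite /del /t divfK ?subrr // gt_eqF.
have dsum : \sum_(j < m) del j = 1.
  by rewrite /del sumrB -mulr_sumr sg mulr0 subr0.
have dY : forall y, Y y -> \sum_(j < m) del j * g j y = 0.
  move=> y Yy; rewrite /del.
  under eq_bigr => j _ do rewrite mulrBl -mulrA.
  by rewrite sumrB -mulr_sumr gY // mulr0 subr0 galY.
pose A : {set 'I_m} := [set j | 0 < del j]%SET.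
have notA : forall (F : 'I_m -> R), (forall j, del j = 0 -> F j = 0) ->
    \sum_(j in A) F j = \sum_j F j.
  move=> F hF; apply: sum_in_set => j; rewrite inE => hj; apply: hF.
  by apply/eqP; rewrite eq_le del_ge0 andbT leNgt.
pose g' := fun j : 'I_#|A| => g (enum_val j).
apply: (minS (range g')).
  split.
    by move=> _ [j _ <-]; exists (enum_val j).
  move=> /(_ (g i2) (ex_intro2 _ _ i2 I erefl)) [j _ /ginj e].
  by have := enum_valP j; rewrite e inE del2 ltxx.
exists #|A|, g'; split.
  by move=> j j' /ginj /enum_val_inj.
split=> //; split; first by move=> j; apply: gext.
exists y0; split=> //.
exists (fun j => del (enum_val j)); split.
  by move=> j; have := enum_valP j; rewrite inE.
split.
  by rewrite -(big_enum_val (fun j => del j)) /= notA // => j ->.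
split; first by move=> j; apply: galy0.
move=> y Yy.
rewrite -(big_enum_val (fun j => del j * g j y)) /= notA ?dY // => j ->.
by rewrite mul0r.
Qed.

End Claim.

Theorem mainTheorem12 (R : realType) (V : normedModType R) (n k l : nat)
  (Y : set V) (x0 : V) (S : set (V -> R)) :
  has_dim V n -> subspace_dim Y k -> (1 <= k)%N -> (k <= n.-1)%N ->
  ~ Y x0 ->
  minimal_Iset Y x0 S -> has_card S l ->
  affdim_le (bestapprox Y x0) (k%:Z - l%:Z + 1).
Proof.
move=> _ [b [bind ->]] k1 kn Yx0 [[m [g [ginj [rg Ifam]]]] minS] [f [finj rf]].
move: (Ifam) => [gext [y0 [[Yy0 dy0] [al [alpos [alsum [galy0 galY]]]]]]].
rewrite -rg in minS rf.
have glin : forall j, lin_functional (g j) by move=> j; case: (gext j) => [[]].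
have gnorm : forall j z, `|g j z| <= `|z| by move=> j; case: (gext j) => [[]].
have lm : (l <= m)%N.
  have hex : forall i, exists j, g j = f i.
    move=> i; have : range f (f i) by exists i.
    by rewrite rf => -[j _ e]; exists j.
  have [h hh] := choice hex.
  have hinj : injective h by move=> i i' e; apply: finj; rewrite -hh e hh.
  by have := leq_card _ hinj; rewrite !card_ord.
have claim := prop_claim ginj gext (conj Yy0 dy0) alpos alsum galy0 galY minS.
move=> M p Pp aff.
set d := `|x0 - y0|.
have key : forall i j, g j (x0 - p i) = d.
  move=> i j.
  have [Yp dp] := Pp i.
  have nd : `|x0 - p i| = d by rewrite dp -dy0.
  have e1 : \sum_(j < m) al j * g j (x0 - p i) = d.
    have -> : x0 - p i = (x0 - y0) + (y0 - p i) by rewrite addrA subrK.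
    under eq_bigr => j' _ do rewrite (lfD _ _ (glin j')) mulrDr.
    rewrite big_split /= (galY _ (span_sub Yy0 Yp)).
    under eq_bigr => j' _ do rewrite galy0.
    by rewrite -mulr_suml alsum mul1r addr0.
  have e2 : \sum_(j < m) al j * (d - g j (x0 - p i)) = 0.
    under eq_bigr => j' _ do rewrite mulrBr.
    by rewrite sumrB e1 -mulr_suml alsum mul1r subrr.
  have ge0 : forall j', 0 <= al j' * (d - g j' (x0 - p i)).
    move=> j'; apply: mulr_ge0; first exact: ltW.
    rewrite subr_ge0 -nd.
    exact: le_trans (ler_norm _) (gnorm _ _).
  have := @psumr_eq0P _ _ predT _ (fun j _ => ge0 j) e2 j isT.
  move/eqP; rewrite mulf_eq0 gt_eqF //= subr_eq0 => /eqP <-.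
  by [].
pose v i := p (lift ord0 i) - p ord0.
have vY : forall i, span_of b (v i) by move=> i; apply: span_sub; [exact: (Pp _).1|exact: (Pp _).1].
have gv : forall i j, g j (v i) = 0.
  move=> i j.
  have -> : v i = (x0 - p ord0) - (x0 - p (lift ord0 i)).
    by rewrite /v opprB [RHS]addrC addrA subrK.
  by rewrite (lfB _ _ (glin j)) !key subrr.
have [cc ccs] := choice vY.
pose C := \matrix_(i < M, t < k) cc i t.
pose F := \matrix_(j < m, t < k) g j (b t).
have CK : (C <= kermx F^T)%MS.
  apply/sub_kermxP; apply/matrixP => i j; rewrite !mxE.
  rewrite -[RHS](gv i j) (ccs i) (lf_sum _ _ (glin j)).
  by apply: eq_bigr => t _; rewrite !mxE.
have Cfree : \rank C = M.
  apply/eqP; rewrite -[_ == _]/(row_free C) -kermx_eq0; apply/eqP/matrixP => r s.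
  set u := row r (kermx C).
  have uC : u *m C = 0 by rewrite /u -row_mul mulmx_ker row0.
  have : \sum_(i < M) u 0 i *: v i = 0.
    under eq_bigr => i _ do rewrite (ccs i) scaler_sumr.
    rewrite exchange_big /=; apply: big1 => t _.
    under eq_bigr => i _ do rewrite scalerA.
    rewrite -scaler_suml.
    have -> : \sum_(i < M) u 0 i * cc i t = (u *m C) 0 t.
      by rewrite !mxE; apply: eq_bigr => i _; rewrite !mxE.
    by rewrite uC mxE scale0r.
  move/aff => h; have := h s; rewrite /u !mxE => ->.
  by rewrite ?mxE.
have KF : (m - \rank F <= 1)%N.
  rewrite -mxrank_ker.
  pose ar : 'rV[R]_m := \row_i al i.
  apply: leq_trans (rank_leq_row ar).
  apply: mxrankS; apply/row_subP => r.
  set u := row r (kermx F).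
  have uF : u *m F = 0 by rewrite /u -row_mul mulmx_ker row0.
  have uY : forall y, span_of b y -> \sum_(i < m) u 0 i * g i y = 0.
    move=> _ [c ->].
    under eq_bigr => i _ do rewrite (lf_sum _ _ (glin i)) mulr_sumr.
    rewrite exchange_big /=; apply: big1 => t _.
    under eq_bigr => i _ do rewrite mulrCA.
    rewrite -mulr_sumr.
    have -> : \sum_(i < m) u 0 i * g i (b t) = (u *m F) 0 t.
      by rewrite !mxE; apply: eq_bigr => i _; rewrite !mxE.
    by rewrite uF mxE mulr0.
  have hu : forall i, u 0 i = (\sum_(j < m) u 0 j) * al i := claim _ uY.
  have -> : u = (\sum_(j < m) u 0 j) *: ar.
    by apply/matrixP => a i; rewrite ord1 hu !mxE.
  exact: scalemx_sub (submx_refl _).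
have rC := mxrankS CK.
rewrite mxrank_ker mxrank_tr Cfree in rC.
have rF := rank_leq_col F.
lia.
Qed.
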